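(* Let $\mathcal{T}$ be an MPQ-tree of an interval graph $G=(V,E)$, let $(x,y)\in E$ with $x$ over $y$ and $node(x)\neq node(y)$. If the $\langle x,y\rangle$-tree-path is rotable, then $(x,y)$ is an interval edge.
   Context: Graphs are finite and simple; for $G=(V,E)$ and $e\in E$, $G-e=(V,E\setminus\{e\})$. An edge $(x,y)\in E$ of an interval graph $G$ is an interval edge if $G-(x,y)$ is an interval graph. An MPQ-tree of an interval graph $G=(V,E)$, $V=\{1,\dots,n\}$, is a rooted plane tree whose nodes are P-nodes and Q-nodes. Each P-node carries a (possibly empty) set of vertices. A Q-node has $k\ge 3$ ordered positions $1,\dots,k$; position $i$ carries a set $S_i\subseteq V$ (the $i$-th section) and a child subtree $T_i$, which may be empty. Every vertex $v$ is assigned to exactly one node $node(v)$: either $v$ lies in the set of the P-node $node(v)$, or $node(v)$ is a Q-node and $v$ lies exactly in the sections $S_{l(v)},\dots,S_{r(v)}$ of it, with $l(v)<r(v)$. For a node with child subtrees $T_1,\dots,T_k$, $V_i$ denotes the set of vertices assigned to nodes of $T_i$ ($V_i=\emptyset$ if $T_i$ is empty). The maximal cliques of $G$ are in bijection with the descending paths from the root which at a P-node continue into one of its children (stopping if there is none) and at a Q-node choose a position $i$ and continue into $T_i$ (stopping if $T_i$ is empty); the clique is the union of the sets of the visited P-nodes and the chosen sections. Reading these cliques left to right gives a linear order of the maximal cliques, and the orders obtained this way after arbitrarily permuting children of P-nodes and reversing the positions of Q-nodes are exactly the orders of the maximal cliques of $G$ in which the cliques containing any fixed vertex are consecutive. Moreover,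 for every Q-node with sections $S_1,\dots,S_k$: (a) $V_1\neq\emptyset$ and $V_k\ne\emptyset$; (b) $S_1\subseteq S_2$ and $S_k\subseteq S_{k-1}$; (c) $S_{i-1}\cap S_i\neq\emptyset$ for $2\le i\le k$; (d) $S_{i-1}\neq S_i$ for $2\le i\le k$; (e) $(S_i\cap S_{i+1})\setminus S_1\neq\emptyset$ and $(S_{i-1}\cap S_i)\setminus S_k\neq\emptyset$ for $2\le i\le k-1$; (f) $(S_{i-1}\cup V_{i-1})\setminus S_i\neq\emptyset$ and $(S_i\cup V_i)\setminus S_{i-1}\neq\emptyset$ for $2\le i\le k$; and further (g) no empty P-node has an empty P-node as its parent, (h) no P-node has exactly one child whose root is a P-node, (i) every child subtree of a P-node is nonempty. We say $x$ is over $y$ if $node(x)$ is the lowest common ancestor of $node(x)$ and $node(y)$ in $\mathcal{T}$. For $x$ over $y$ with $node(x)\ne node(y)$, the $\langle x,y\rangle$-tree-path is the tree path $node(x)=n_1,n_2,\dots,n_t=node(y)$. For a Q-node with sections $S_1,\dots,S_k$, section $S_a$ is central if $1<a<k$, and for a vertex $v$ of that Q-node it is $v$-central if $l(v)<a<r(v)$ and $v$-non-central if $a\in\{l(v),r(v)\}$. The path goes through a central section if for some $1<i<t$, $n_i$ is a Q-node and $n_{i+1}$ lies in the subtree $T_a$ of a central section $S_a$ of $n_i$. The path starts in a central (resp. non-central) section if $n_1$ is a Q-node and $n_2$ lies in the subtree $T_a$ of an $x$-central (resp. $x$-non-central) section $S_a$ of $n_1$. It starts in a P-node if $n_1$ is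 a P-node, and ends in a P-node (resp. Q-node) if $n_t$ is a P-node (resp. Q-node). The path is almost rotable if it does not go through a central section and $n_t$ is a P-node that is a leaf of $\mathcal{T}$; it is rotable if it is almost rotable and it either starts in a P-node or starts in a non-central section. *)

(* Defs.v *)
From HB Require Import structures.
From mathcomp Require Import all_boot.
From Stdlib Require List Permutation.

Set Implicit Arguments.
Unset Strict Implicit.
Unset Printing Implicit Defensive.

Section Graphs.
Variable T : finType.

(* G is an interval graph: intersection graph of closed intervals
   [lo v, hi v] (integer endpoints; for finite graphs this is the same
   class as real endpoints).  The equation also forces g to be simple
   (symmetric, irreflexive). *)
Definition is_interval (g : rel T) : Prop :=
  exists lo hi : T -> nat,
    (forall v, lo v <= hi v) /\
    (forall u v, g u v = [&& u != v, lo u <= hi v & lo v <= hi u]).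

Definition del_edge (g : rel T) (x y : T) : rel T :=
  fun u v => g u v && ~~ (((u == x) && (v == y)) || ((u == y) && (v == x))).

Definition interval_edge (g : rel T) (x y : T) : Prop :=
  g x y /\ is_interval (del_edge g x y).

Definition clique (g : rel T) (K : {set T}) : bool :=
  [forall u in K, forall v in K, (u != v) ==> g u v].

Definition maxclique (g : rel T) (K : {set T}) : bool :=
  clique g K && [forall K' : {set T}, (clique g K' && (K \subset K')) ==> (K' == K)].

End Graphs.

(* A P-node carries a set and its (nonempty) child subtrees; a Q-node
   carries its positions 1..k, each with a section S_i and a possibly
   empty child subtree T_i (None = empty). *)
Inductive mpq (T : finType) : Type :=
| PNode : {set T} -> seq (mpq T) -> mpq T
| QNode : seq ({set T} * option (mpq T)) -> mpq T.
Arguments PNode {T}.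
Arguments QNode {T}.

Section MPQ.
Variable T : finType.

(* Nodes are addressed by the sequence of (0-based) child indices from the
   root (for a Q-node: the position whose child subtree is entered). *)
Fixpoint subt (t : mpq T) (a : seq nat) {struct a} : option (mpq T) :=
  match a with
  | [::] => Some t
  | i :: a' =>
    match t with
    | PNode _ cs =>
        match nth None (map Some cs) i with Some c => subt c a' | None => None end
    | QNode ps =>
        match nth (set0, None) ps i with (_, Some c) => subt c a' | _ => None end
    end
  end.

(* sections of a Q-node, 0-based: sec ps i = S_(i+1) *)
Definition sec (ps : seq ({set T} * option (mpq T))) (i : nat) : {set T} :=
  nth set0 (map fst ps) i.

Definition node_of (t : mpq T) (v : T) (a : seq nat) : bool :=
  match subt t a with
  | Some (PNode X _) => v \in X
  | Some (QNode ps) => has (fun p : {set T} * option (mpq T) => v \in p.1) ps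
  | None => false
  end.

(* v \in V_i for the node at address a (V_i : vertices assigned to nodes
   of the i-th child subtree, 0-based) *)
Definition inV (t : mpq T) (a : seq nat) (i : nat) (v : T) : Prop :=
  exists a', node_of t v (a ++ i :: a').

(* conditions (a)-(f) for a Q-node at address a, in 0-based indexing *)
Definition qnode_ok (t : mpq T) (a : seq nat) (ps : seq ({set T} * option (mpq T))) : Prop :=
  let k := size ps in
  let S := sec ps in
  let V := inV t a in
  3 <= k /\
  ((exists v, V 0 v) /\ (exists v, V k.-1 v)) /\
  (S 0 \subset S 1 /\ S k.-1 \subset S k.-2) /\
  (forall i, 0 < i < k -> S i.-1 :&: S i != set0) /\
  (forall i, 0 < i < k -> S i.-1 != S i) /\
  (forall i, 0 < i < k.-1 ->
     ((S i :&: S i.+1) :\: S 0 != set0) /\ ((S i.-1 :&: S i) :\: S k.-1 != set0)) /\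
  (forall i, 0 < i < k ->
     (exists v, (v \in S i.-1 \/ V i.-1 v) /\ v \notin S i) /\
     (exists v, (v \in S i \/ V i v) /\ v \notin S i.-1)).

(* conditions (g),(h) for a P-node at address a; (i) holds by construction *)
Definition pnode_ok (t : mpq T) (a : seq nat) (S : {set T}) (cs : seq (mpq T)) : Prop :=
  (S = set0 -> forall j S' cs', subt t (a ++ [:: j]) = Some (PNode S' cs') -> S' != set0) /\
  ~ (exists S' cs', cs = [:: PNode S' cs']).

Fixpoint cliques (t : mpq T) : seq {set T} :=
  match t with
  | PNode X cs =>
      match cs with
      | [::] => [:: X]
      | _ => flatten (map (fun c => map (setU X) (cliques c)) cs)
      end
  | QNode ps =>
      flatten (map (fun p => match p with
                             | (X, None) => [:: X]
                             | (X, Some c) => map (setU X) (cliques c)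
                             end) ps)
  end.

Inductive tequiv : mpq T -> mpq T -> Prop :=
| teP S cs cs' cs'' :
    List.Forall2 tequiv cs cs' -> Permutation.Permutation cs' cs'' ->
    tequiv (PNode S cs) (PNode S cs'')
| teQ ps ps' : List.Forall2 pequiv ps ps' -> tequiv (QNode ps) (QNode ps')
| teQrev ps ps' : List.Forall2 pequiv ps ps' -> tequiv (QNode ps) (QNode (rev ps'))
with pequiv : ({set T} * option (mpq T)) -> ({set T} * option (mpq T)) -> Prop :=
| peNone S : pequiv (S, None) (S, None)
| peSome S c c' : tequiv c c' -> pequiv (S, Some c) (S, Some c').

Definition consecutive (s : seq {set T}) : Prop :=
  forall v i j k, i <= j <= k -> k < size s ->
    v \in nth set0 s i -> v \in nth set0 s k -> v \in nth set0 s j.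

Definition is_mpq_tree (g : rel T) (t : mpq T) : Prop :=
  (* bijection paths <-> maximal cliques, giving a linear order *)
  (uniq (cliques t) /\ (forall K, (K \in cliques t) = maxclique g K)) /\
  (* the obtainable orders are exactly the consecutive orders *)
  (forall s : seq {set T},
     (exists t', tequiv t t' /\ cliques t' = s) <->
     [/\ uniq s, (forall K, (K \in s) = maxclique g K) & consecutive s]) /\
  (forall v, exists! a, node_of t v a) /\
  (forall v a ps, node_of t v a -> subt t a = Some (QNode ps) ->
     exists l r, l < r < size ps /\
       forall i, i < size ps -> (v \in sec ps i) = (l <= i <= r)) /\
  (forall a, match subt t a with
             | Some (QNode ps) => qnode_ok t a ps
             | Some (PNode X cs) => pnode_ok t a X cs
             | None => True
             end).

(* l(v), r(v) (0-based) in a Q-node with positions ps *)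
Definition lsec (ps : seq ({set T} * option (mpq T))) (v : T) : nat :=
  find (fun p : {set T} * option (mpq T) => v \in p.1) ps.
Definition rsec (ps : seq ({set T} * option (mpq T))) (v : T) : nat :=
  (size ps).-1 - find (fun p : {set T} * option (mpq T) => v \in p.1) (rev ps).

(* x over y: node(x) is the lowest common ancestor of node(x), node(y),
   i.e. the address ax of node(x) is a prefix of the address ay of node(y).
   The <x,y>-tree-path consists of the nodes at addresses take m ay,
   size ax <= m <= size ay. *)
Definition is_over (ax ay : seq nat) : bool := prefix ax ay.

(* goes through a central section: an inner node n_i (1<i<t) is a Q-node
   and n_(i+1) lies in the subtree of a central section of it *)
Definition through_central (t : mpq T) (ax ay : seq nat) : Prop :=
  exists m ps, size ax < m < size ay /\
    subt t (take m ay) = Some (QNode ps) /\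
    0 < nth 0 ay m < (size ps).-1.

Definition starts_in_P (t : mpq T) (ax : seq nat) : Prop :=
  exists S cs, subt t ax = Some (PNode S cs).

Definition starts_central (t : mpq T) (x : T) (ax ay : seq nat) : Prop :=
  exists ps, subt t ax = Some (QNode ps) /\
    lsec ps x < nth 0 ay (size ax) < rsec ps x.

Definition starts_noncentral (t : mpq T) (x : T) (ax ay : seq nat) : Prop :=
  exists ps, subt t ax = Some (QNode ps) /\
    (nth 0 ay (size ax) = lsec ps x \/ nth 0 ay (size ax) = rsec ps x).

Definition ends_in_P_leaf (t : mpq T) (ay : seq nat) : Prop :=
  exists S, subt t ay = Some (PNode S [::]).

Definition almost_rotable (t : mpq T) (ax ay : seq nat) : Prop :=
  ~ through_central t ax ay /\ ends_in_P_leaf t ay.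

Definition rotable (t : mpq T) (x : T) (ax ay : seq nat) : Prop :=
  almost_rotable t ax ay /\ (starts_in_P t ax \/ starts_noncentral t x ax ay).

End MPQ.

(* Main.v *)
Require Import Defs.
From HB Require Import structures.
From mathcomp Require Import all_boot.
From mathcomp Require Import zify.
From Stdlib Require List Permutation.

Set Implicit Arguments.
Unset Strict Implicit.
Unset Printing Implicit Defensive.


Section Model.
Variable T : finType.
Variable g : rel T.
Hypothesis Hg : is_interval g.

Lemma int_irr u : g u u = false.
Proof. case: Hg => lo [hi [_ H]]; by rewrite H eqxx. Qed.

Lemma int_sym u v : g u v = g v u.
Proof.
case: Hg => lo [hi [_ H]]; rewrite !H eq_sym.
by case: (v != u) => //=; rewrite andbC.
Qed.

Lemma ext_max (Q : {set T}) : clique g Q -> exists M, maxclique g M /\ Q \subset M.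
Proof.
move=> HQ.
have P0 : clique g Q && (Q \subset Q) by rewrite HQ subxx.
case: (@arg_maxnP _ Q (fun M : {set T} => clique g M && (Q \subset M)) (fun M : {set T} => #|M|) P0) => M /andP [cM sQM] Hmax.
exists M; split => //.
rewrite /maxclique cM /=; apply/forallP => K; apply/implyP => /andP [cK sMK].
have : #|K| <= #|M| by apply: Hmax; rewrite cK (subset_trans sQM sMK).
move=> le; rewrite eq_sym eqEcard sMK le //.
Qed.

Lemma pair_clique u v : g u v -> clique g [set u; v].
Proof.
move=> guv; apply/forallP => a; apply/implyP => Ha; apply/forallP => b; apply/implyP => Hb.
apply/implyP => nab.
move: Ha Hb nab; rewrite !inE => /orP [] /eqP -> /orP [] /eqP ->; rewrite ?eqxx //.
by rewrite int_sym.
Qed.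

Lemma single_clique u : clique g [set u].
Proof.
apply/forallP => a; apply/implyP; rewrite inE => /eqP ->; apply/forallP => b;
  apply/implyP; rewrite inE => /eqP ->; by rewrite eqxx.
Qed.

Variable s : seq {set T}.
Hypothesis Hs : forall K, (K \in s) = maxclique g K.
Hypothesis Hc : consecutive s.

Definition lo (v : T) := find (fun K : {set T} => v \in K) s.
Definition hi (v : T) := (size s).-1 - find (fun K : {set T} => v \in K) (rev s).

Lemma has_v v : has (fun K : {set T} => v \in K) s.
Proof.
case: (ext_max (single_clique v)) => M [mM sM].
apply/hasP; exists M; first by rewrite Hs.
by apply: (subsetP sM); rewrite inE.
Qed.

Lemma lo_in v : v \in nth set0 s (lo v).
Proof. exact: (nth_find set0 (has_v v)). Qed.

Lemma lo_lt v : lo v < size s.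
Proof. by rewrite /lo -has_find has_v. Qed.

Lemma hi_in v : v \in nth set0 s (hi v).
Proof.
have h : has (fun K : {set T} => v \in K) (rev s) by rewrite has_rev has_v.
have := nth_find set0 h; rewrite nth_rev; last by rewrite -size_rev -has_find.
move: h; rewrite has_find size_rev /hi => h.
have -> : (size s - (find (fun K : {set T} => v \in K) (rev s)).+1) =
  ((size s).-1 - find (fun K : {set T} => v \in K) (rev s)) by lia.
by [].
Qed.

Lemma hi_lt v : hi v < size s.
Proof. have := lo_lt v; rewrite /hi; lia. Qed.

Lemma in_nth_lo v j : v \in nth set0 s j -> lo v <= j.
Proof.
move=> h; rewrite leqNgt; apply/negP => lt.
by have := before_find set0 lt; rewrite h.
Qed.

Lemma in_nth_hi v j : j < size s -> v \in nth set0 s j -> j <= hi v.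
Proof.
move=> js h; rewrite leqNgt; apply/negP => lt.
have lt2 : size s - j.+1 < find (fun K : {set T} => v \in K) (rev s).
  move: lt; rewrite /hi. lia.
have := before_find set0 lt2; rewrite nth_rev; last by lia.
have -> : size s - (size s - j.+1).+1 = j by lia.
by rewrite h.
Qed.

Lemma in_nth v j : (v \in nth set0 s j) = (lo v <= j <= hi v) && (j < size s).
Proof.
apply/idP/idP.
  move=> h; have js : j < size s.
    rewrite ltnNge; apply/negP => sj; move: h; by rewrite nth_default // inE.
  by rewrite js in_nth_lo // in_nth_hi.
case/andP => /andP [a b] js.
apply: (Hc (i := lo v) (k := hi v)); rewrite ?a ?b ?hi_lt ?lo_in ?hi_in //.
Qed.

Lemma model u v : g u v = [&& u != v, lo u <= hi v & lo v <= hi u].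
Proof.
apply/idP/idP.
  move=> guv; have nuv : u != v by apply/eqP => e; move: guv; rewrite e int_irr.
  case: (ext_max (pair_clique guv)) => M [mM sM].
  have Ms : M \in s by rewrite Hs.
  set j := index M s.
  have js : j < size s by rewrite index_mem.
  have eM : nth set0 s j = M by rewrite nth_index.
  have uM : u \in nth set0 s j by rewrite eM (subsetP sM) // !inE eqxx.
  have vM : v \in nth set0 s j by rewrite eM (subsetP sM) // !inE eqxx orbT.
  rewrite nuv /=; move: uM vM; rewrite !in_nth js !andbT => /andP [a b] /andP [c d].
  apply/andP; split; lia.
case/and3P => nuv h1 h2.
have key : forall a b, a != b -> lo a <= lo b -> lo b <= hi a -> g a b.
  move=> a b nab l1 l2.
  have jb : lo b < size s by apply: lo_lt.
  have aj : a \in nth set0 s (lo b) by rewrite in_nth l1 l2 jb.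
  have bj : b \in nth set0 s (lo b) by apply: lo_in.
  have : maxclique g (nth set0 s (lo b)) by rewrite -Hs mem_nth.
  case/andP => /forallP /(_ a) /implyP /(_ aj) /forallP /(_ b) /implyP /(_ bj) /implyP H _.
  exact: H.
case: (leqP (lo u) (lo v)) => l.
  by apply: key.
by rewrite int_sym; apply: key; rewrite 1?eq_sym // ltnW.
Qed.

End Model.

Lemma modify (T : finType) (g : rel T) (lo hi : T -> nat) (x y : T) :
  (forall v, lo v <= hi v) ->
  (forall u v, g u v = [&& u != v, lo u <= hi v & lo v <= hi u]) ->
  x != y -> lo y = lo x -> hi y = lo x ->
  is_interval (del_edge g x y).
Proof.
move=> Hl Hm nxy ey1 ey2.
exists (fun v => 3 * lo v + (v == x)), (fun v => if v == y then 3 * lo v else 3 * hi v + 2).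
split.
  move=> v; case: (eqVneq v y) => [->|nvy]; first by rewrite /= eq_sym (negbTE nxy) addn0.
  case: (v == x); have := Hl v; lia.
move=> u v; rewrite /del_edge Hm.
have hx := Hl x; have hy := Hl y; have hu := Hl u; have hv := Hl v.
have ex : (x == y) = false by apply/negbTE.
have ey : (y == x) = false by rewrite eq_sym.
case: (eqVneq u x) => [e1|n1]; case: (eqVneq u y) => [e2|n2];
case: (eqVneq v x) => [e3|n3]; case: (eqVneq v y) => [e4|n4]; subst => /=;
  rewrite ?eqxx ?ex ?ey /= ?andbT ?andbF //=; try by rewrite eqxx in nxy.
all: try (apply/esym/negbTE; apply/negP => /andP [] ? ?; lia).
all: case: (_ != _) => //=; apply/idP/idP => /andP [] ? ?; apply/andP; split; lia.
Qed.



Section Tree.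
Variable T : finType.
Notation pos := ({set T} * option (mpq T))%type.

Definition optP (P : mpq T -> Prop) (o : option (mpq T)) : Prop :=
  match o with Some c => P c | None => True end.

Definition mpq_ind' (P : mpq T -> Prop)
  (HP : forall X cs, List.Forall P cs -> P (PNode X cs))
  (HQ : forall ps : seq pos, List.Forall (fun p => optP P p.2) ps -> P (QNode ps)) :
  forall u, P u :=
  fix F u := match u return P u with
  | PNode X cs => HP X cs ((fix G l := match l return List.Forall P l with
       | [::] => List.Forall_nil _
       | c :: l' => List.Forall_cons c (F c) (G l') end) cs)
  | QNode ps => HQ ps ((fix G (l : seq pos) := match l return List.Forall (fun p => optP P p.2) l with
       | [::] => List.Forall_nil _
       | p :: l' => List.Forall_cons p
           (match p return optP P p.2 with
            | (S0, Some c) => F c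
            | (S0, None) => I end) (G l') end) ps)
  end.

Fixpoint tequiv_refl (u : mpq T) : tequiv u u :=
  match u return tequiv u u with
  | PNode X cs => teP X ((fix G l := match l return List.Forall2 (@tequiv T) l l with
       | [::] => List.Forall2_nil _
       | c :: l' => List.Forall2_cons c c (tequiv_refl c) (G l') end) cs)
       (Permutation.Permutation_refl cs)
  | QNode ps => teQ ((fix G (l : seq pos) := match l return List.Forall2 (@pequiv T) l l with
       | [::] => List.Forall2_nil _
       | p :: l' => List.Forall2_cons p p
           (match p return pequiv p p with
            | (S0, Some c) => peSome S0 (tequiv_refl c)
            | (S0, None) => peNone S0 end) (G l') end) ps)
  end.

Lemma Forall2_refl_te (l : seq (mpq T)) : List.Forall2 (@tequiv T) l l.
Proof. elim: l => [|c l IH]; constructor => //; exact: tequiv_refl. Qed.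

Lemma pequiv_refl (p : pos) : pequiv p p.
Proof. case: p => S [c|]; constructor; exact: tequiv_refl. Qed.

Lemma Forall2_refl_pe (l : seq pos) : List.Forall2 (@pequiv T) l l.
Proof. elim: l => [|c l IH]; constructor => //; exact: pequiv_refl. Qed.

Lemma subt_cat (u : mpq T) a b :
  subt u (a ++ b) = match subt u a with Some w => subt w b | None => None end.
Proof.
elim: a u => [|i a IH] u //=.
case: u => [X cs|ps].
  by case: (nth None (map Some cs) i).
by case: (nth (set0, None) ps i) => S [c|].
Qed.

Lemma node_of_cat (u w : mpq T) v a b :
  subt u a = Some w -> node_of u v (a ++ b) = node_of w v b.
Proof. by move=> h; rewrite /node_of subt_cat h. Qed.

Definition qF (p : pos) : seq {set T} :=
  match p with (X, None) => [:: X] | (X, Some c) => map (setU X) (cliques c) end.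

Lemma cliquesQ ps : cliques (QNode ps) = flatten (map qF ps).
Proof. by []. Qed.

Lemma in_flatten_map (A : Type) (f : A -> seq {set T}) (l : seq A) K :
  K \in flatten (map f l) -> exists j a, nth None (map Some l) j = Some a /\ K \in f a.
Proof.
elim: l => [|a l IH] //=; rewrite mem_cat => /orP [h|h].
  by exists 0, a.
by case: (IH h) => j [b [e h']]; exists j.+1, b.
Qed.

Lemma Forall_nthS (A : Type) (P : A -> Prop) l j a :
  List.Forall P l -> nth None (map Some l) j = Some a -> P a.
Proof.
move=> H; elim: H j => [|b l' Pb _ IH] [|j] //=; [by case=> <- | exact: IH].
Qed.

Lemma clique_node (u : mpq T) K v :
  K \in cliques u -> v \in K -> exists b, node_of u v b.
Proof.
elim/mpq_ind': u K => [X cs IH|ps IH] K.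
  case: cs IH => [|c0 cs0] IH.
    by rewrite /= inE => /eqP -> vX; exists [::].
  move=> /in_flatten_map [j [c [e /mapP [K' K'in ->]]]].
  rewrite inE => /orP [vX|vK]; first by exists [::].
  have [b hb] := Forall_nthS IH e K' K'in vK.
  exists (j :: b); by rewrite /node_of /= e.
rewrite cliquesQ => /in_flatten_map [j [[S o] [e Kin]]] vK.
have hS : v \in S -> exists b, node_of (QNode ps) v b.
  move=> vS; exists [::]; rewrite /node_of /=.
  elim: ps j e {IH Kin} => [|p ps IHp] [|j] //=.
    by case=> ->; rewrite vS.
  by move=> e; rewrite (IHp j e) orbT.
have nj : nth (set0, None) ps j = (S, o).
  elim: ps j e {IH Kin hS} => [|p ps IHp] [|j] //=; [by case | exact: IHp].
case: o e Kin nj => [c|] e Kin nj.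
  move: Kin => /mapP [K' K'in eK]; move: vK; rewrite eK inE => /orP [vS|vK].
    exact: hS.
  have := Forall_nthS IH e; rewrite /= => Pc.
  have [b hb] := Pc K' K'in vK.
  by exists (j :: b); rewrite /node_of /= nj.
by move: Kin; rewrite inE => /eqP eK; apply: hS; rewrite -eK.
Qed.

End Tree.



Section Rot.
Variable T : finType.
Notation pos := ({set T} * option (mpq T))%type.
Variable x : T.
Variable n0 : nat.

Definition revd (d : nat) (ps : seq pos) (i : nat) : bool :=
  if d < n0 then false else if d == n0 then i != lsec ps x else i != 0.

Fixpoint rotm (d : nat) (u : mpq T) (p : seq nat) {struct p} : mpq T :=
  match p with
  | [::] => u
  | i :: p' =>
    match u with
    | PNode X cs =>
      match nth None (map Some cs) i with
      | Some c => PNode X (rotm d.+1 c p' :: take i cs ++ drop i.+1 cs)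
      | None => u
      end
    | QNode ps =>
      match nth (set0, None) ps i with
      | (S0, Some c) =>
        let ps' := take i ps ++ (S0, Some (rotm d.+1 c p')) :: drop i.+1 ps in
        QNode (if revd d ps i then rev ps' else ps')
      | _ => u
      end
    end
  end.

Lemma nthS (A : Type) (a0 : A) (l : seq A) i c :
  nth None (map Some l) i = Some c -> i < size l /\ nth a0 l i = c.
Proof. elim: l i => [|b l IH] [|i] //=; [by case | exact: IH]. Qed.

Lemma split_at (A : Type) (a0 : A) (l : seq A) i :
  i < size l -> l = take i l ++ nth a0 l i :: drop i.+1 l.
Proof. by move=> h; rewrite -(drop_nth a0 h) cat_take_drop. Qed.

Lemma rot_tequiv d u p : tequiv u (rotm d u p).
Proof.
elim: p d u => [|i p IH] d u /=; first exact: tequiv_refl.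
case: u => [X cs|ps].
  case e: (nth None (map Some cs) i) => [c|]; last exact: tequiv_refl.
  have [lt ec] := nthS (PNode set0 [::]) e.
  apply: (@teP _ X cs (take i cs ++ rotm d.+1 c p :: drop i.+1 cs)).
    rewrite {1}(split_at (PNode set0 [::]) lt) ec.
    apply: List.Forall2_app; first exact: Forall2_refl_te.
    constructor; [exact: IH | exact: Forall2_refl_te].
  apply: Permutation.Permutation_sym; exact: Permutation.Permutation_middle.
case e: (nth (set0, None) ps i) => [S [c|]]; last exact: tequiv_refl.
have lt : i < size ps.
  by rewrite ltnNge; apply/negP => h; move: e; rewrite nth_default.
have F2 : List.Forall2 (@pequiv T) ps (take i ps ++ (S, Some (rotm d.+1 c p)) :: drop i.+1 ps).
  rewrite {1}(split_at (set0, None) lt) e.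
  apply: List.Forall2_app; first exact: Forall2_refl_pe.
  constructor; [constructor; exact: IH | exact: Forall2_refl_pe].
by case: (revd d ps i); [apply: teQrev | apply: teQ].
Qed.

End Rot.



Section Gen.
Variable T : finType.
Notation pos := ({set T} * option (mpq T))%type.

Lemma Forall_take_idx (A : Type) (a0 : A) (P : A -> Prop) (l : seq A) i :
  (forall j, j < i -> j < size l -> P (nth a0 l j)) -> List.Forall P (take i l).
Proof.
elim: l i => [|a l IH] [|i] H //=; constructor.
  by apply: (H 0).
by apply: IH => j h1 h2; apply: (H j.+1).
Qed.

Lemma Forall_drop_idx (A : Type) (a0 : A) (P : A -> Prop) (l : seq A) i :
  (forall j, i < j -> j < size l -> P (nth a0 l j)) -> List.Forall P (drop i.+1 l).
Proof.
elim: l i => [|a l IH] i H //=.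
case: i H => [|i] H.
  rewrite drop0; have := @Forall_take_idx A a0 P l (size l); rewrite take_size.
  by apply => j h1 h2; apply: (H j.+1).
by apply: IH => j h1 h2; apply: (H j.+1).
Qed.

Lemma Forall_rev (A : Type) (P : A -> Prop) (l : seq A) :
  List.Forall P l -> List.Forall P (rev l).
Proof.
elim=> [|a l' Pa _ IH] //=.
rewrite rev_cons -cats1; apply/List.Forall_app; split => //; by constructor.
Qed.

Lemma Forall_cat (A : Type) (P : A -> Prop) (l1 l2 : seq A) :
  List.Forall P l1 -> List.Forall P l2 -> List.Forall P (l1 ++ l2).
Proof. by move=> h1 h2; apply/List.Forall_app. Qed.

Lemma flatten_Forall (A : Type) (f : A -> seq {set T}) (P : {set T} -> Prop) l :
  List.Forall (fun a => forall K, K \in f a -> P K) l ->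
  forall K, K \in flatten (map f l) -> P K.
Proof.
elim=> [|a l' Pa _ IH] K //=; rewrite mem_cat => /orP [] h; [exact: Pa | exact: IH].
Qed.

Lemma map_setU_not (S : {set T}) (l : seq {set T}) v (K : {set T}) :
  v \notin S -> (forall K', K' \in l -> v \notin K') -> K \in map (setU S) l -> v \notin K.
Proof. by move=> nS H /mapP [K' K'in ->]; rewrite inE negb_or nS H. Qed.

Lemma has_nth_sec (ps : seq pos) j v :
  j < size ps -> v \in (nth (set0, None) ps j).1 -> has (fun p : pos => v \in p.1) ps.
Proof. by move=> lt h; apply/(has_nthP (set0, None)); exists j. Qed.

End Gen.

Section Main.
Variable T : finType.
Notation pos := ({set T} * option (mpq T))%type.
Variable t : mpq T.
Variables x y : T.
Variables ax ay : seq nat.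
Hypothesis Hux : forall b, node_of t x b -> b = ax.
Hypothesis Huy : forall b, node_of t y b -> b = ay.
Hypothesis Hx : node_of t x ax.
Hypothesis Hy : node_of t y ay.
Hypothesis Hpre : ax = take (size ax) ay.
Hypothesis Hlt : size ax < size ay.
Hypothesis Hnc : ~ through_central t ax ay.
Hypothesis Hleaf : ends_in_P_leaf t ay.
Hypothesis Hstart : starts_in_P t ax \/ starts_noncentral t x ax ay.

Let n0 := size ax.

Definition Good (v : T) (p : pos) := forall K, K \in qF p -> v \notin K.

Lemma sibling v av (Hu : forall b, node_of t v b -> b = av) d j c :
  subt t (take d ay ++ [:: j]) = Some c -> (forall b, take d ay ++ j :: b <> av) ->
  forall K, K \in cliques c -> v \notin K.
Proof.
move=> hc hne K Kin; apply/negP => vK.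
have [b hb] := clique_node Kin vK.
have : node_of t v ((take d ay ++ [:: j]) ++ b) by rewrite (node_of_cat _ _ hc).
rewrite -catA /= => /Hu; exact: hne.
Qed.

Lemma addr_y d j b : d < size ay -> j != nth 0 ay d -> take d ay ++ j :: b <> ay.
Proof.
move=> lt nj e.
have h : nth 0 (take d ay ++ j :: b) d = j by rewrite nth_cat size_take lt ltnn subnn.
by move: nj; rewrite -h e eqxx.
Qed.

Lemma addr_x d j b : d <= n0 -> j != nth 0 ay d -> take d ay ++ j :: b <> ax.
Proof.
move=> le nj e.
have dlt : d < size ay by rewrite /n0 in le; lia.
case: (ltnP d n0) => h.
  have h2 : nth 0 (take d ay ++ j :: b) d = j by rewrite nth_cat size_take dlt ltnn subnn.
  move: nj; rewrite -h2 e Hpre nth_take //; by rewrite eqxx.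
have : size (take d ay ++ j :: b) = size ax by rewrite e.
rewrite size_cat size_take dlt /= -/n0; lia.
Qed.

Lemma ynot a : size a < size ay -> node_of t y a = false.
Proof. by move=> lt; apply/negP => /Huy e; move: lt; rewrite e ltnn. Qed.

Lemma xnot a : size a != n0 -> node_of t x a = false.
Proof. by move=> ne; apply/negP => /Hux e; move: ne; rewrite e eqxx. Qed.

Lemma good_of v (p : pos) : v \notin p.1 ->
  (forall c, p.2 = Some c -> forall K, K \in cliques c -> v \notin K) -> Good v p.
Proof.
case: p => S [c|] /= nS H K.
  by apply: map_setU_not => //; apply: H.
by rewrite inE => /eqP ->.
Qed.

Lemma Good_flat v l : List.Forall (Good v) l -> forall K, K \in flatten (map (@qF T) l) -> v \notin K.
Proof. by move=> H; apply: (flatten_Forall (P := fun K => v \notin K)). Qed.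

Lemma main_rot d u : subt t (take d ay) = Some u -> d <= size ay ->
  exists A K R, cliques (rotm x n0 d u (drop d ay)) = A ++ K :: R /\ y \in K /\
   (forall K', K' \in A ++ R -> y \notin K') /\ (forall K', K' \in A -> x \notin K') /\
   (n0 < d -> A = [::]).
Proof.
move e: (drop d ay) => p; elim: p d u e => [|i p IH] d u e hu hd.
  have dd : d = size ay by have := congr1 size e; rewrite size_drop /=; lia.
  move: hu; rewrite dd take_size; case: Hleaf => S hS; rewrite hS => -[<-] /=.
  exists [::], S, [::]; split => //; split; last by [].
  by move: Hy; rewrite /node_of hS.
have dlt : d < size ay by rewrite ltnNge; apply/negP => h; move: e; rewrite drop_oversize.
have [ei ep] : nth 0 ay d = i /\ drop d.+1 ay = p by move: e; rewrite (drop_nth 0 dlt) => -[].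
have etk : take d.+1 ay = take d ay ++ [:: i] by rewrite (take_nth 0 dlt) ei cats1.
have [c hc] : exists c, subt t (take d.+1 ay) = Some c.
  case: Hleaf => S hS.
  have := subt_cat t (take d.+1 ay) (drop d.+1 ay); rewrite cat_take_drop hS.
  by case: (subt t (take d.+1 ay)) => // c _; exists c.
have hc' : subt u [:: i] = Some c by move: hc; rewrite etk subt_cat hu.
have [A' [K' [R' [eq' [yK' [yAR' [xA' nA']]]]]]] := IH d.+1 c ep hc dlt.
have ynd : node_of t y (take d ay) = false by apply: ynot; rewrite size_take dlt.
have sib_y : forall j c2, j != i -> subt t (take d ay ++ [:: j]) = Some c2 ->
    forall K, K \in cliques c2 -> y \notin K.
  move=> j c2 nj h2; apply: (sibling Huy h2) => b; apply: addr_y => //; by rewrite ei.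
have sib_x : forall j c2, d <= n0 -> j != i -> subt t (take d ay ++ [:: j]) = Some c2 ->
    forall K, K \in cliques c2 -> x \notin K.
  move=> j c2 le nj h2; apply: (sibling Hux h2) => b; apply: addr_x => //; by rewrite ei.
have yAR'' : forall K, K \in A' -> y \notin K.
  by move=> K h; apply: yAR'; rewrite mem_cat h.
have yR'' : forall K, K \in R' -> y \notin K.
  by move=> K h; apply: yAR'; rewrite mem_cat h orbT.
case: u hu hc' => [X cs|ps] hu hc'.
  have en : nth None (map Some cs) i = Some c.
    by move: hc'; rewrite /=; case: (nth None (map Some cs) i) => // c2 [->].
  rewrite /= en /= eq' map_cat /=.
  have yX : y \notin X by apply/negP => h; move: ynd; rewrite /node_of hu h.
  set rest := take i cs ++ drop i.+1 cs.
  pose Pr := fun c2 : mpq T => forall K, K \in map (setU X) (cliques c2) -> y \notin K.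
  have Frest : List.Forall Pr rest.
    have gen : forall j, j < size cs -> j != i -> Pr (nth (PNode set0 [::]) cs j).
      move=> j lt nj K; apply: map_setU_not => // K2; apply: (sib_y j) => //.
      by rewrite subt_cat hu /= (nth_map (PNode set0 [::])).
    apply: Forall_cat.
      apply: (@Forall_take_idx _ (PNode set0 [::]) Pr) => j h1 h2; apply: gen => //; by rewrite ltn_eqF.
    apply: (@Forall_drop_idx _ (PNode set0 [::]) Pr) => j h1 h2; apply: gen => //; by rewrite gtn_eqF.
  exists (map (setU X) A'), (X :|: K'), (map (setU X) R' ++ flatten (map (fun c2 => map (setU X) (cliques c2)) rest)).
  split; first by rewrite -catA.
  split; first by rewrite inE yK' orbT.
  split.
    move=> K; rewrite !mem_cat => /or3P [] h.
    - exact: (map_setU_not yX yAR'' h).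
    - exact: (map_setU_not yX yR'' h).
    - exact: (flatten_Forall Frest h).
  split.
    case: (ltnP d n0) => dn K h.
      have xX : x \notin X.
        apply/negP => xX.
        have nx : node_of t x (take d ay) = false by apply: xnot; rewrite size_take dlt ltn_eqF.
        by move: nx; rewrite /node_of hu /= xX.
      exact: (map_setU_not xX xA' h).
    by move: h; rewrite nA' //; lia.
  by move=> dn; rewrite nA' //; lia.
move: hc' => /=.
case E: (nth (set0, None) ps i) => [S [c2|]] //= [ec]; subst c2.
have ilt : i < size ps.
  by rewrite ltnNge; apply/negP => h; move: E; rewrite nth_default.
have yS : y \notin S.
  apply/negP => yS; move: ynd; rewrite /node_of hu /=.
  by rewrite (has_nth_sec (j := i)) // E.
have gq : forall v j, j < size ps -> j != i -> v \notin (nth (set0, None) ps j).1 ->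
    (forall c2, subt t (take d ay ++ [:: j]) = Some c2 -> forall K, K \in cliques c2 -> v \notin K) ->
    Good v (nth (set0, None) ps j).
  move=> v j jlt nj nv H; apply: good_of => // c2.
  case E2: (nth (set0, None) ps j) => [S2 o2] /= h2; subst o2.
  by apply: H; rewrite subt_cat hu /= E2.
have gy : forall j, j < size ps -> j != i -> Good y (nth (set0, None) ps j).
  move=> j jlt nj; apply: gq => //.
    apply/negP => yj; move: ynd; rewrite /node_of hu /=.
    by rewrite (has_nth_sec (j := j)).
  by move=> c2; apply: sib_y.
have Fyt : List.Forall (Good y) (take i ps).
  apply: (@Forall_take_idx _ (set0, None) (Good y)) => j h1 h2; apply: gy => //; by rewrite ltn_eqF.
have Fyd : List.Forall (Good y) (drop i.+1 ps).
  apply: (@Forall_drop_idx _ (set0, None) (Good y)) => j h1 h2; apply: gy => //; by rewrite gtn_eqF.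
set rv := revd x n0 d ps i.
set B := if rv then rev (drop i.+1 ps) else take i ps.
set E' := if rv then rev (take i ps) else drop i.+1 ps.
have FyB : List.Forall (Good y) B by rewrite /B; case: ifP => _ //; apply: Forall_rev.
have FyE : List.Forall (Good y) E' by rewrite /E'; case: ifP => _ //; apply: Forall_rev.
have eps : (if rv then rev (take i ps ++ (S, Some (rotm x n0 d.+1 c p)) :: drop i.+1 ps)
            else take i ps ++ (S, Some (rotm x n0 d.+1 c p)) :: drop i.+1 ps)
           = B ++ (S, Some (rotm x n0 d.+1 c p)) :: E'.
  by rewrite /B /E'; case: ifP => _ //; rewrite rev_cat rev_cons cat_rcons.
have hB : n0 < d -> B = [::].
  move=> dn; rewrite /B /rv /revd ltnNge (ltnW dn) /= gtn_eqF //.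
  case: (eqVneq i 0) => [->|i0] /=; first by rewrite take0.
  have : ~ (0 < i < (size ps).-1).
    move=> h; apply: Hnc; exists d, ps; split; first by rewrite dn dlt.
    by rewrite ei; split.
  move=> h; have ie : i = (size ps).-1 by move: h i0 ilt; lia.
  by rewrite ie prednK ?drop_size //; lia.
have xA : forall K, K \in flatten (map (@qF T) B) ++ map (setU S) A' -> x \notin K.
  case: (ltngtP d n0) => dn K.
  -
    have xnd : node_of t x (take d ay) = false by apply: xnot; rewrite size_take dlt ltn_eqF.
    have xsec : forall j, j < size ps -> x \notin (nth (set0, None) ps j).1.
      move=> j jlt; apply/negP => xj; move: xnd; rewrite /node_of hu /=.
      by rewrite (has_nth_sec (j := j)).
    have rvF : rv = false by rewrite /rv /revd dn.
    have FxB : List.Forall (Good x) B.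
      rewrite /B rvF; apply: (@Forall_take_idx _ (set0, None) (Good x)) => j h1 h2.
      apply: gq => //; [by rewrite ltn_eqF | exact: xsec | move=> c2; apply: sib_x => //; [exact: ltnW | by rewrite ltn_eqF]].
    rewrite mem_cat => /orP [] h; first exact: (Good_flat FxB h).
    have xS : x \notin S by have := xsec i ilt; rewrite E.
    exact: (map_setU_not xS xA' h).
  - by rewrite hB // (nA' (ltnW dn)).
  - have A0 : A' = [::] by apply: nA'; rewrite dn.
    rewrite A0 cats0.
    have hxs : has (fun p : pos => x \in p.1) ps.
      by move: Hx; rewrite /node_of Hpre -/n0 -dn hu.
    have FxB : List.Forall (Good x) B.
      rewrite /B /rv /revd dn ltnn eqxx /=.
      case: (eqVneq i (lsec ps x)) => [il|nil] /=.
        apply: (@Forall_take_idx _ (set0, None) (Good x)) => j h1 h2.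
        apply: gq => //; first by rewrite ltn_eqF.
          by rewrite il /lsec in h1; rewrite (before_find _ h1).
        by move=> c2; apply: sib_x; rewrite ?dn ?ltn_eqF.
      have ir : i = rsec ps x.
        case: Hstart => [[S0 [cs0 h0]]|[ps0 [h0 [h1|h1]]]].
        - by move: h0; rewrite Hpre -/n0 -dn hu.
        - by move: h0 h1; rewrite {1}Hpre -/n0 -dn hu ei => -[<-] h1; rewrite h1 eqxx in nil.
        - by move: h0 h1; rewrite {1}Hpre -/n0 -dn hu ei => -[<-].
      apply: Forall_rev.
      apply: (@Forall_drop_idx _ (set0, None) (Good x)) => j h1 h2.
      apply: gq => //; first by rewrite gtn_eqF.
        have hr : has (fun p : pos => x \in p.1) (rev ps) by rewrite has_rev.
        move: hr; rewrite has_find size_rev => hr.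
        move: h1; rewrite ir /rsec => h1.
        have lt2 : size ps - j.+1 < find (fun p : pos => x \in p.1) (rev ps) by lia.
        have := before_find (set0, None) lt2; rewrite nth_rev; last by rewrite ?size_rev; lia.
        have -> : size ps - (size ps - j.+1).+1 = j by lia.
        by move=> ->.
      by move=> c2; apply: sib_x; rewrite ?dn ?gtn_eqF.
    move=> h; apply: (Good_flat FxB); move: h; by rewrite /= ?cats0.
rewrite eps map_cat flatten_cat /= eq' map_cat /=.
exists (flatten (map (@qF T) B) ++ map (setU S) A'), (S :|: K'),
  (map (setU S) R' ++ flatten (map (@qF T) E')).
split; first by rewrite -!catA.
split; first by rewrite inE yK' orbT.
split.
  move=> K; rewrite !mem_cat => /orP [/orP [] h|/orP [] h].
  - exact: (Good_flat FyB h).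
  - exact: (map_setU_not yS yAR'' h).
  - exact: (map_setU_not yS yR'' h).
  - exact: (Good_flat FyE h).
split; first exact: xA.
by move=> dn; rewrite hB // (nA' (ltnW dn)).
Qed.

End Main.


Theorem mainTheorem6 (n : nat) (g : rel 'I_n) (t : mpq 'I_n)
    (x y : 'I_n) (ax ay : seq nat) :
  is_interval g -> is_mpq_tree g t ->
  g x y ->
  node_of t x ax -> node_of t y ay ->
  is_over ax ay -> ax != ay ->
  rotable t x ax ay ->
  interval_edge g x y.
Proof.
move=> Hg [_ [Hord [Huq _]]] gxy Hx Hy Hover Hne [[Hnc Hleaf] Hstart].
have uniq_of : forall v a, node_of t v a -> forall b, node_of t v b -> b = a.
  move=> v a ha b hb; case: (Huq v) => a0 [h0 H0].
  by rewrite -(H0 _ ha) -(H0 _ hb).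
have Hux := uniq_of x ax Hx.
have Huy := uniq_of y ay Hy.
have Hpre : ax = take (size ax) ay by move: Hover; rewrite /is_over prefixE => /eqP ->.
have Hlt : size ax < size ay.
  rewrite ltn_neqAle; apply/andP; split.
    apply/negP => /eqP e; move: Hne; by rewrite Hpre e take_size eqxx.
  have := size_take (size ax) ay; rewrite -Hpre; case: ifP => h e; lia.
have ht0 : subt t (take 0 ay) = Some t by rewrite take0.
have [A [K [R [eqc [yK [yAR [xA _]]]]]]] :=
  main_rot Hux Huy Hx Hy Hpre Hlt Hnc Hleaf Hstart ht0 (leq0n _).
rewrite drop0 in eqc.
set s := cliques (rotm x (size ax) 0 t ay) in eqc.
have [_ Hs Hc] : [/\ uniq s, (forall K, (K \in s) = maxclique g K) & consecutive s].
  by apply/Hord; exists (rotm x (size ax) 0 t ay); split => //; apply: rot_tequiv.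
have Hm := model Hg Hs Hc.
have nxy : x != y by apply/negP => /eqP e; move: gxy; rewrite e int_irr.
have sz : size s = size A + (size R).+1 by rewrite eqc size_cat.
have yK2 : y \in nth set0 s (size A) by rewrite eqc nth_cat ltnn subnn.
have loy : lo s y = size A.
  apply/eqP; rewrite eqn_leq (in_nth_lo yK2) /=.
  rewrite leqNgt; apply/negP => h.
  have := lo_in Hs y; rewrite {1}eqc nth_cat h => hy.
  by have := yAR (nth set0 A (lo s y)); rewrite mem_cat mem_nth // hy => /(_ isT).
have hiy : hi s y = size A.
  apply/eqP; rewrite eqn_leq (in_nth_hi (s := s)) ?sz //; last by lia.
  rewrite andbT leqNgt; apply/negP => h.
  have := hi_in Hs y; rewrite {1}eqc nth_cat ltnNge (ltnW h) /=.
  have hl := hi_lt Hs y; rewrite sz in hl.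
  case e: (hi s y - size A) => [|k]; first by lia.
  move=> /= hy.
  have kR : k < size R by lia.
  by have := yAR (nth set0 R k); rewrite mem_cat mem_nth ?orbT // hy => /(_ isT).
have lox : lo s x = size A.
  apply/eqP; rewrite eqn_leq.
  have := Hm x y; rewrite gxy hiy => /esym /and3P [_ -> _] /=.
  rewrite leqNgt; apply/negP => h.
  have := lo_in Hs x; rewrite {1}eqc nth_cat h => hx.
  by have := xA (nth set0 A (lo s x)); rewrite mem_nth // hx => /(_ isT).
split => //.
apply: (modify (lo := lo s) (hi := hi s)) => //.
- by move=> v; have := lo_in Hs v; rewrite (in_nth Hs Hc) => /andP [/andP [a b] _]; lia.
- by rewrite loy lox.
- by rewrite hiy lox.
Qed.
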